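(* Let $p\ge 4$ and let $I$ consist of one of the configurations $(3,3,1)$ or $(3,2,2)$ (numbers of chips of the three colors) together with $2p-7$ additional colored chips all of a single color, and no jokers or dominoes. Then there is a sequence of exactly $5p-12$ exchanges taking $I$ to a configuration with $p$ dominoes.
   Context: Game model: a configuration is a tuple $(a,b,c,x,d)$ of nonnegative integers: $a,b,c$ colored chips of three colors, $x$ jokers, $d$ dominoes. Exchanges: Rule 1: remove three chips, consisting of some number $j\in\{0,1,2,3\}$ of jokers together with $3-j$ colored chips of pairwise distinct colors, and add one domino and one joker. Rule 2: if $d\ge 3$, remove three dominoes and add seven jokers. *)

(* Defs.v *)
From Stdlib Require Import Arith List Permutation.
Import ListNotations.

(* A configuration (a,b,c,x,d): a,b,c colored chips of three colors,
   x jokers, d dominoes. *)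
Record config := Config { ca : nat; cb : nat; cc : nat; cx : nat; cd : nat }.

(* Rule 1: remove ea+eb+ec colored chips (at most one of each color, so the
   colors are pairwise distinct) together with j jokers, where
   ea+eb+ec+j = 3; add one domino and one joker. *)
Inductive exchange : config -> config -> Prop :=
| rule1 : forall a b c x d ea eb ec j,
    ea <= 1 -> eb <= 1 -> ec <= 1 -> ea + eb + ec + j = 3 ->
    exchange (Config (a + ea) (b + eb) (c + ec) (x + j) d)
             (Config a b c (x + 1) (d + 1))
| rule2 : forall a b c x d,
    exchange (Config a b c x (d + 3)) (Config a b c (x + 7) d).

Inductive exchanges : nat -> config -> config -> Prop :=
| ex_nil : forall C, exchanges 0 C C
| ex_cons : forall n C C' C'', exchange C C' -> exchanges n C' C'' ->
    exchanges (S n) C C''.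

(* Main.v *)
Require Import Defs.
From Stdlib Require Import Arith List Permutation Lia.
Import ListNotations.

Lemma r1 a b c x d ea eb ec j :
  ea <= 1 -> eb <= 1 -> ec <= 1 -> ea + eb + ec + j = 3 ->
  ea <= a -> eb <= b -> ec <= c -> j <= x ->
  exchange (Config a b c x d) (Config (a-ea) (b-eb) (c-ec) (x-j+1) (d+1)).
Proof.
  intros.
  replace (Config a b c x d) with
    (Config (a-ea + ea) (b-eb+eb) (c-ec+ec) (x-j+j) d) at 1
    by (f_equal; lia).
  rewrite (Nat.add_comm (x-j) 1). rewrite <- (Nat.add_comm (x-j) 1).
  apply rule1; lia.
Qed.

Lemma r2 a b c x d : 3 <= d ->
  exchange (Config a b c x d) (Config a b c (x+7) (d-3)).
Proof.
  intros. replace (Config a b c x d) with (Config a b c x (d-3+3)) at 1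
    by (f_equal; lia). apply rule2.
Qed.

Lemma r1g a b c x d ea eb ec j a' b' c' x' d' :
  ea <= 1 -> eb <= 1 -> ec <= 1 -> ea + eb + ec + j = 3 ->
  a = a' + ea -> b = b' + eb -> c = c' + ec -> x' + 2 = x + 3 - j + 0 + 0 -> j <= x ->
  d' = d + 1 ->
  exchange (Config a b c x d) (Config a' b' c' x' d').
Proof.
  intros. replace a' with (a-ea) by lia. replace b' with (b-eb) by lia.
  replace c' with (c-ec) by lia. replace x' with (x-j+1) by lia. subst d'.
  apply r1; lia.
Qed.

Lemma r2g a b c x d x' d' : d = d' + 3 -> x' = x + 7 ->
  exchange (Config a b c x d) (Config a b c x' d').
Proof. intros; subst. replace d' with (d'+3-3) at 2 by lia. apply r2; lia. Qed.

Lemma exchanges_app n m C C' C'' :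
  exchanges n C C' -> exchanges m C' C'' -> exchanges (n+m) C C''.
Proof.
  induction 1; intros; simpl; auto. econstructor; eauto.
Qed.

Definition addc (C : config) u v w :=
  Config (ca C + u) (cb C + v) (cc C + w) (cx C) (cd C).

Lemma exchange_add C C' u v w :
  exchange C C' -> exchange (addc C u v w) (addc C' u v w).
Proof.
  destruct 1; unfold addc; simpl.
  - apply (r1g _ _ _ _ _ ea eb ec j); lia.
  - apply r2g; lia.
Qed.

Lemma exchanges_add n C C' u v w :
  exchanges n C C' -> exchanges n (addc C u v w) (addc C' u v w).
Proof.
  induction 1. constructor. econstructor; eauto using exchange_add.
Qed.

Lemma cycle5 u v w x d i1 i2 i3 :
  i1 <= 1 -> i2 <= 1 -> i3 <= 1 -> i1 + i2 + i3 = 1 ->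
  exchanges 5 (Config (u+2*i1) (v+2*i2) (w+2*i3) x (d+3))
              (Config u v w (x+1) (d+4)).
Proof.
  intros.
  eapply ex_cons. apply (r2g _ _ _ _ _ (x+7) d); lia.
  eapply ex_cons. apply (r1g _ _ _ _ _ i1 i2 i3 2 (u+i1) (v+i2) (w+i3) (x+6) (d+1)); lia.
  eapply ex_cons. apply (r1g _ _ _ _ _ i1 i2 i3 2 u v w (x+5) (d+2)); lia.
  eapply ex_cons. apply (r1g _ _ _ _ _ 0 0 0 3 u v w (x+3) (d+3)); lia.
  eapply ex_cons. apply (r1g _ _ _ _ _ 0 0 0 3 u v w (x+1) (d+4)); lia.
  constructor.
Qed.

Lemma loop i1 i2 i3 : i1 <= 1 -> i2 <= 1 -> i3 <= 1 -> i1 + i2 + i3 = 1 ->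
  forall k u v w x d,
  exchanges (5*k) (Config (u+2*k*i1) (v+2*k*i2) (w+2*k*i3) x (d+3))
                  (Config u v w (x+k) (d+3+k)).
Proof.
  intros H1 H2 H3 H4. induction k; intros.
  - simpl. rewrite !Nat.add_0_r. constructor.
  - replace (5 * S k) with (5 + 5*k) by lia.
    eapply exchanges_app.
    + replace (Config (u + 2 * S k * i1) (v + 2 * S k * i2) (w + 2 * S k * i3) x (d + 3))
       with (Config ((u+2*k*i1)+2*i1) ((v+2*k*i2)+2*i2) ((w+2*k*i3)+2*i3) x (d + 3))
       by (f_equal; lia).
      apply cycle5; lia.
    + replace (d+4) with ((d+1)+3) by lia.
      replace (Config u v w (x + S k) (d + 3 + S k)) with
        (Config u v w (x+1+k) (d+1+3+k)) by (f_equal; lia).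
      apply IHk.
Qed.

Lemma finish i1 i2 i3 a b c k :
  i1 <= 1 -> i2 <= 1 -> i3 <= 1 -> i1 + i2 + i3 = 1 ->
  (exists x, exchanges 8 (Config a b c 0 0) (Config 0 0 0 x 4)) ->
  exists C, exchanges (8+5*k) (Config (a+2*k*i1) (b+2*k*i2) (c+2*k*i3) 0 0) C
            /\ cd C = 4 + k.
Proof.
  intros H1 H2 H3 H4 [x Hx].
  eexists; split.
  - eapply exchanges_app.
    + apply (exchanges_add _ _ _ (2*k*i1) (2*k*i2) (2*k*i3) Hx).
    + unfold addc; simpl. apply (loop i1 i2 i3 H1 H2 H3 H4 k 0 0 0 x 1).
  - simpl. lia.
Qed.

Lemma perm_sum l l' : Permutation l l' -> list_sum l = list_sum l'.
Proof. induction 1; simpl; lia. Qed.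

Ltac stepb :=
  ((apply (r1 _ _ _ _ _ 1 1 1 0))
  + (apply (r1 _ _ _ _ _ 1 1 0 1)) + (apply (r1 _ _ _ _ _ 1 0 1 1))
  + (apply (r1 _ _ _ _ _ 0 1 1 1)) + (apply (r1 _ _ _ _ _ 1 0 0 2))
  + (apply (r1 _ _ _ _ _ 0 1 0 2)) + (apply (r1 _ _ _ _ _ 0 0 1 2))
  + (apply (r1 _ _ _ _ _ 0 0 0 3)) + (apply r2)); lia.

Ltac go := lazymatch goal with
  | |- exchanges 0 _ _ => apply ex_nil
  | |- exchanges (S _) _ _ => eapply ex_cons; [ stepb | cbn -[Nat.add]; simpl; go ]
  end.


Lemma perm_cases a0 b0 c0 :
  (Permutation [a0; b0; c0] [3; 3; 1] \/ Permutation [a0; b0; c0] [3; 2; 2]) ->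
  a0 + b0 + c0 = 7 /\ (a0 = 1 \/ a0 = 2 \/ a0 = 3) /\ (b0 = 1 \/ b0 = 2 \/ b0 = 3)
  /\ (c0 = 1 \/ c0 = 2 \/ c0 = 3) /\ (a0 = 2 \/ b0 = 2 \/ c0 = 2 -> a0 <> 1 /\ b0 <> 1 /\ c0 <> 1).
Proof.
  intros [H|H]; pose proof (perm_sum _ _ H) as Hs; simpl in Hs;
  assert (Ha : In a0 [a0;b0;c0]) by (simpl; auto);
  assert (Hb : In b0 [a0;b0;c0]) by (simpl; auto);
  assert (Hc : In c0 [a0;b0;c0]) by (simpl; auto);
  apply (Permutation_in _ H) in Ha; apply (Permutation_in _ H) in Hb;
  apply (Permutation_in _ H) in Hc; simpl in Ha, Hb, Hc; lia.
Qed.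

Theorem mainTheorem6 (p a0 b0 c0 ea eb ec : nat) :
  4 <= p ->
  (Permutation [a0; b0; c0] [3; 3; 1] \/ Permutation [a0; b0; c0] [3; 2; 2]) ->
  ((ea, eb, ec) = (2 * p - 7, 0, 0) \/ (ea, eb, ec) = (0, 2 * p - 7, 0) \/
   (ea, eb, ec) = (0, 0, 2 * p - 7)) ->
  exists C : config,
    exchanges (5 * p - 12) (Config (a0 + ea) (b0 + eb) (c0 + ec) 0 0) C /\
    cd C = p.
Proof.
  intros Hp HP He.
  apply perm_cases in HP.
  destruct (Nat.le_exists_sub 4 p Hp) as [k [-> _]].
  replace (5 * (k+4) - 12) with (8 + 5*k) by lia.
  replace (2 * (k+4) - 7) with (1 + 2*k) in He by lia.
  replace (k+4) with (4+k) by lia.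
  remember (1 + 2*k) as m eqn:Em.
  destruct He as [He|[He|He]]; injection He as -> -> ->; subst m.
  - replace (a0 + (1 + 2*k)) with ((a0+1) + 2*k*1) by lia.
    replace (b0 + 0) with (b0 + 2*k*0) by lia.
    replace (c0 + 0) with (c0 + 2*k*0) by lia.
    apply finish; try lia.
    destruct HP as [Hs [Ha [Hb [Hc Hn]]]];
    destruct Ha as [-> | [-> | ->]]; destruct Hb as [-> | [-> | ->]];
    destruct Hc as [-> | [-> | ->]]; try lia; simpl; eexists; go.
  - replace (b0 + (1 + 2*k)) with ((b0+1) + 2*k*1) by lia.
    replace (a0 + 0) with (a0 + 2*k*0) by lia.
    replace (c0 + 0) with (c0 + 2*k*0) by lia.
    apply finish; try lia.
    destruct HP as [Hs [Ha [Hb [Hc Hn]]]];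
    destruct Ha as [-> | [-> | ->]]; destruct Hb as [-> | [-> | ->]];
    destruct Hc as [-> | [-> | ->]]; try lia; simpl; eexists; go.
  - replace (c0 + (1 + 2*k)) with ((c0+1) + 2*k*1) by lia.
    replace (a0 + 0) with (a0 + 2*k*0) by lia.
    replace (b0 + 0) with (b0 + 2*k*0) by lia.
    apply finish; try lia.
    destruct HP as [Hs [Ha [Hb [Hc Hn]]]];
    destruct Ha as [-> | [-> | ->]]; destruct Hb as [-> | [-> | ->]];
    destruct Hc as [-> | [-> | ->]]; try lia; simpl; eexists; go.
Qed.
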